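(* For positive integers $n,m$, $H(n,m)=0$ if $m>n$, $H(n,m)=1$ if $m=n$, and $H(n,m)=1$ if $m=1$. In all other cases $n>m>1$, \[H(n,m)=\sum_{j=1}^{n-m}H(n-m,j)\binom{m-1}{j-1}.\]
   Context: A composition of a positive integer $n$ is an ordered tuple $(c_1,\ldots,c_m)$ of positive integers with $c_1+\cdots+c_m=n$; it has $m$ parts. It is headstrong if $c_1\ge c_i$ for all $i$. $H(n,m)$ denotes the number of headstrong compositions of $n$ with exactly $m$ parts. *)

(* Defs.v *)
From mathcomp Require Import all_boot.
Set Implicit Arguments. Unset Strict Implicit. Unset Printing Implicit Defensive.

(* A composition of n with m parts is encoded as a finite function
   c : 'I_m -> 'I_n.+1 (each part is at most n, which is automatic for a
   composition of n) with all parts positive and sum n. *)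
Definition is_composition (n m : nat) (c : {ffun 'I_m -> 'I_n.+1}) : bool :=
  [forall i, 0 < (c i : nat)] && (\sum_(i < m) (c i : nat) == n).

Definition headstrong (n m : nat) (c : {ffun 'I_m -> 'I_n.+1}) : bool :=
  [forall i, forall j, (val i == 0) ==> ((c j : nat) <= c i)].

Definition H (n m : nat) : nat :=
  #|[set c : {ffun 'I_m -> 'I_n.+1} | is_composition c && headstrong c]|.

(* Main.v *)
Require Import Defs.
From mathcomp Require Import all_boot zify.
Set Implicit Arguments. Unset Strict Implicit. Unset Printing Implicit Defensive.

Fixpoint Pc (l s a : nat) : nat :=
  if l is l'.+1 then \sum_(1 <= x < a.+1) (if x <= s then Pc l' (s - x) a else 0)
  else (s == 0 : nat).

Fixpoint Qc (l s b : nat) : nat :=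
  if l is l'.+1 then \sum_(0 <= x < b.+1) (if x <= s then Qc l' (s - x) b else 0)
  else (s == 0 : nat).

Lemma Pc_small l s a : s < l -> Pc l s a = 0.
Proof.
elim: l s => [|l IH] s //= hs.
rewrite big_nat_cond big1 // => x /andP[/andP[h1 h2] _].
case: ifP => // hx; apply: IH; lia.
Qed.

Lemma Pc_shift l s a : Pc l s a.+1 = if l <= s then Qc l (s - l) a else 0.
Proof.
elim: l s => [|l IH] s /=; first by rewrite subn0.
rewrite big_add1 /=.
have -> : \sum_(0 <= i < a.+1) (if i.+1 <= s then Pc l (s - i.+1) a.+1 else 0)
   = \sum_(0 <= i < a.+1) (if l < s then (if i <= s - l.+1 then Qc l (s - l.+1 - i) a else 0) else 0).
  apply: eq_bigr => i _; rewrite IH.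
  case: (leqP i.+1 s) => h1; case: (leqP l (s - i.+1)) => h2;
   case: (ltnP l s) => h3; case: (leqP i (s - l.+1)) => h4 //; try lia.
  congr Qc; lia.
case: (ltnP l s) => h; last by rewrite big1.
by [].
Qed.

Lemma Qc_00 l : Qc l 0 0 = 1.
Proof. by elim: l => //= l IH; rewrite big_nat1 /= IH. Qed.

Lemma Qc_binom l s b : Qc l s b = \sum_(0 <= i < l.+1) 'C(l, i) * Pc i s b.
Proof.
elim: l s => [|l IH] s /=; first by rewrite big_nat1 bin0 mul1n.
rewrite big_ltn // leq0n IH subn0.
have -> : \sum_(1 <= i < b.+1) (if i <= s then Qc l (s - i) b else 0)
   = \sum_(0 <= i < l.+1) 'C(l, i) * Pc i.+1 s b.
  transitivity (\sum_(1 <= x < b.+1) \sum_(0 <= i < l.+1)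
        'C(l, i) * (if x <= s then Pc i (s - x) b else 0)).
    apply: eq_bigr => x _; case: ifP => _; rewrite ?IH //.
    by rewrite big1 // => i _; rewrite muln0.
  rewrite exchange_big /=; apply: eq_bigr => i _.
  by rewrite -big_distrr.
rewrite [in RHS]big_ltn // bin0 mul1n.
rewrite [in RHS]big_add1 /=.
rewrite (@big_ltn _ _ _ 0 l.+1) // bin0 mul1n.
rewrite -!addnA; congr addn.
rewrite [X in X + _](_ : _ = \sum_(0 <= i < l.+1) 'C(l, i.+1) * Pc i.+1 s b).
  by rewrite -big_split /=; apply: eq_bigr => i _; rewrite binS mulnDl.
rewrite big_add1 /= big_nat_recr //= bin_small // mul0n addn0 //.
Qed.

Fixpoint L (m N : nat) : seq (seq nat) :=
  if m is m'.+1 then [seq x :: s | x <- iota 0 N, s <- L m' N] else [:: [::]].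

Lemma mem_L m N s : (s \in L m N) = (size s == m) && all (fun x => x < N) s.
Proof.
elim: m s => [|m IH] [|x s] //=.
  by apply/allpairsP => -[[y t] [] ].
apply/allpairsP/idP => [[[y t] [/= hy ht [-> ->]]]|/andP[hx /andP[hs hs']]].
  move: ht hy; rewrite IH mem_iota add0n eqSS => /andP[-> ->] /andP[_ ->]; done.
exists (x, s); split => //=; first by rewrite mem_iota add0n.
by rewrite IH -eqSS hx.
Qed.

Lemma uniq_L m N : uniq (L m N).
Proof.
elim: m => [|m IH] //=; apply: allpairs_uniq => //; first exact: iota_uniq.
by move=> [x s] [y t] _ _ /= [-> ->].
Qed.

Lemma count_L m N (p : pred (seq nat)) :
  count p (L m.+1 N) = \sum_(0 <= x < N) count (fun s => p (x :: s)) (L m N).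
Proof.
rewrite /= count_flatten sumnE big_map /index_iota subn0 big_map.
by apply: eq_bigr => x _; rewrite count_map.
Qed.

Definition tl m N (c : {ffun 'I_m -> 'I_N}) : seq nat := [seq (c i : nat) | i <- enum 'I_m].

Lemma nth_tl m N (c : {ffun 'I_m -> 'I_N}) (i : 'I_m) : nth 0 (tl c) i = c i.
Proof.
by rewrite /tl (nth_map i) ?nth_ord_enum // size_enum_ord.
Qed.

Lemma size_tl m N (c : {ffun 'I_m -> 'I_N}) : size (tl c) = m.
Proof. by rewrite size_map size_enum_ord. Qed.

Lemma tl_inj m N : injective (@tl m N).
Proof.
move=> c1 c2 h; apply/ffunP => i.
have := congr1 (fun s => nth 0 s i) h; rewrite /= !nth_tl => e.
exact: ord_inj.
Qed.

Lemma mem_tl m n s :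
  (s \in map (@tl m n.+1) (enum {ffun 'I_m -> 'I_n.+1})) =
  (size s == m) && all (fun x => x < n.+1) s.
Proof.
apply/mapP/idP => [[c _ ->]|/andP[/eqP hs ha]].
  rewrite size_tl eqxx /=; apply/allP => x /mapP [i _ ->]; exact: ltn_ord.
exists [ffun i : 'I_m => inord (nth 0 s i) : 'I_n.+1]; first by rewrite mem_enum.
apply: (@eq_from_nth _ 0); first by rewrite size_tl hs.
move=> k hk'; have hk : k < m by rewrite -hs.
have -> : k = Ordinal hk by [].
rewrite nth_tl ffunE inordK //.
by apply: (allP ha); apply: mem_nth.
Qed.

Lemma card_tl m n (f : pred (seq nat)) :
  #|[set c : {ffun 'I_m -> 'I_n.+1} | f (tl c)]| = count f (L m n.+1).
Proof.
rewrite cardE /enum_mem size_filter.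
rewrite (eq_count (a2 := preim (@tl m n.+1) f)); last by move=> c; rewrite /= inE.
rewrite -count_map -enumT; apply/permP.
apply: uniq_perm; first by rewrite map_inj_uniq ?enum_uniq //; exact: tl_inj.
  exact: uniq_L.
by move=> s; rewrite mem_tl mem_L.
Qed.

Definition hsP n (s : seq nat) : bool :=
  all (fun x => 0 < x) s && (sumn s == n) && all (fun x => x <= head 0 s) s.

Lemma HL n m : H n m = count (hsP n) (L m n.+1).
Proof.
rewrite /H -card_tl; apply: eq_card => c; rewrite !inE.
rewrite /is_composition /headstrong /hsP; congr andb; first congr andb.
- apply/forallP/allP => [h x /mapP [i _ ->]|h i]; first exact: h.
  by apply: h; apply/mapP; exists i; rewrite ?mem_enum.
- by rewrite /tl sumnE big_map big_enum.
- case: m c => [|k] c.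
    have e0 : enum 'I_0 = [::] by apply/size0nil; rewrite size_enum_ord.
    by rewrite /tl e0 /=; apply/forallP => -[].
  rewrite -nth0 (_ : 0 = @ord0 k) // nth_tl.
  apply/forallP/allP => [h x /mapP [j _ ->]|h i].
    by move/forallP: (h ord0) => /(_ j).
  apply/forallP => j; apply/implyP => /eqP hi.
  rewrite (_ : i = ord0); last exact: val_inj.
  by apply: h; apply/mapP; exists j; rewrite ?mem_enum.
Qed.

Lemma Lcount k N a t : a < N ->
  count (fun s => all (fun y => 0 < y <= a) s && (sumn s == t)) (L k N) = Pc k t a.
Proof.
move=> ha; elim: k t => [|k IH] t.
  by rewrite /= addn0 eq_sym.
rewrite count_L /=.
transitivity (\sum_(0 <= x < N) (if (0 < x <= a) && (x <= t) then Pc k (t - x) a else 0)).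
  apply: eq_bigr => x _; case: ifP => h.
    rewrite -IH; apply: eq_count => s /=.
    move/andP: h => [hxa hxt]; rewrite hxa /=; congr andb; apply/eqP/eqP; lia.
  rewrite (eq_count (a2 := pred0)) ?count_pred0 // => s /=.
  apply/negbTE/negP => /andP[/andP[h1 _] /eqP h2]; move: h; rewrite h1 /=.
  move/negbT; rewrite -ltnNge; lia.
rewrite (@big_cat_nat _ _ _ a.+1) //=.
rewrite [X in _ + X]big_nat_cond [X in _ + X]big1 ?addn0; last first.
  move=> x /andP[/andP[h1 h2] _]; rewrite (_ : (x <= a) = false) ?andbF //; lia.
rewrite big_ltn //= add0n; apply: eq_big_nat => x /andP[h1 h2].
by rewrite h1 /= (_ : x <= a = true) //; lia.
Qed.

Lemma HP n k : H n k.+1 = \sum_(1 <= x < n.+1) Pc k (n - x) x.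
Proof.
rewrite HL count_L big_ltn //.
rewrite (eq_count (a2 := pred0)) ?count_pred0 ?add0n //.
apply: eq_big_nat => x /andP[h1 h2].
rewrite -(@Lcount k n.+1 x (n - x) h2); apply: eq_count => s.
rewrite /hsP /= h1 leqnn /=.
have -> : all (fun y => 0 < y <= x) s = all (fun y => 0 < y) s && all (fun y => y <= x) s.
  by rewrite -all_predI.
case: (all _ s); case: (all _ s); rewrite /= ?andbF //.
apply/eqP/eqP; lia.
Qed.

Lemma sum_ext0 (F : nat -> nat) a b : a <= b -> (forall i, a <= i -> F i = 0) ->
  \sum_(0 <= i < a) F i = \sum_(0 <= i < b) F i.
Proof.
move=> hab hF; rewrite [RHS](@big_cat_nat _ _ _ a 0 b) //=.
rewrite [X in _ = _ + X]big_nat_cond [X in _ = _ + X]big1 ?addn0 //.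
by move=> i /andP[/andP[h _] _]; exact: hF.
Qed.

Lemma Pc_a0 l s : 0 < s -> Pc l s 0 = 0.
Proof. by case: l => [|l] /= hs; [case: s hs | rewrite big_geq]. Qed.

Theorem mainTheorem10 (n m : nat) (hn : 0 < n) (hm : 0 < m) :
  (n < m -> H n m = 0) /\
  (m = n -> H n m = 1) /\
  (m = 1 -> H n m = 1) /\
  (1 < m < n ->
     H n m = \sum_(1 <= j < (n - m).+1) H (n - m) j * 'C(m - 1, j - 1)).
Proof.
split; [|split; [|split]].
- move=> hnm; case: m hm hnm => // k _ hnm.
  rewrite HP big_nat_cond big1 // => x /andP[/andP[h1 h2] _]; apply: Pc_small; lia.
- move=> e; subst n; case: m hm hn => // k _ _.
  rewrite HP big_ltn // subn1 /= Pc_shift leqnn subnn Qc_00.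
  rewrite big_nat_cond big1 ?addn0 // => x /andP[/andP[h1 h2] _]; apply: Pc_small; lia.
- move=> ->; rewrite HP /= big_nat_recr //= subnn /= big_nat_cond big1 //.
  move=> x /andP[/andP[h1 h2] _]; rewrite subn_eq0 leqNgt h2 //.
- move=> /andP[h1 h2]; case: m hm h1 h2 => // k _ h1 h2.
  rewrite subSS subn0.
  have [d hd] : exists d, d = n - k.+1 by exists (n - k.+1).
  rewrite -hd.
  have hd0 : 0 < d by lia.
  transitivity (\sum_(0 <= b < d.+1) Qc k (d - b) b).
    rewrite HP big_add1 /= (@big_cat_nat _ _ _ d.+1) //=; last by lia.
    rewrite [X in _ + X]big_nat_cond [X in _ + X]big1 ?addn0; last first.
      move=> i /andP[/andP[i1 i2] _]; rewrite Pc_shift (_ : k <= n - i.+1 = false) //; lia.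
    apply: eq_big_nat => i /andP[i1 i2]; rewrite Pc_shift (_ : k <= n - i.+1 = true); last by lia.
    congr Qc; lia.
  under eq_bigr do rewrite Qc_binom.
  rewrite exchange_big /=.
  transitivity (\sum_(0 <= i < k.+1) 'C(k, i) * \sum_(1 <= b < d.+1) Pc i (d - b) b).
    apply: eq_bigr => i _; rewrite big_distrr /= big_ltn // subn0 Pc_a0 // muln0 add0n.
    by [].
  rewrite big_add1 /=.
  transitivity (\sum_(0 <= i < d) 'C(k, i) * \sum_(1 <= b < d.+1) Pc i (d - b) b); last first.
    by apply: eq_bigr => i _; rewrite HP subSS subn0 mulnC.
  rewrite (@sum_ext0 _ k.+1 (k + d)); last 2 first.
  - lia.
  - by move=> i hi; rewrite bin_small.
  rewrite [RHS](@sum_ext0 _ d (k + d)) //; first lia.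
  move=> i hi; rewrite big_nat_cond big1 ?muln0 // => x /andP[/andP[x1 x2] _].
  apply: Pc_small; lia.
Qed.
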